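(* Let $n\geqslant 2$ and let $V_n$ be the set of integers $t$ such that there exist caterpillar trees $G$ (gene tree) and $S$ (species tree), both with $n$ leaves bijectively labeled by the same label set, for which $(G,S)$ has exactly $t$ coalescent histories. Then $$|V_n|\leqslant \frac12\left[\frac{1}{n}\binom{2n-2}{n-1}+\binom{n-1}{\lfloor (n-1)/2\rfloor}\right].$$
   Context: All trees are binary, rooted, leaf-labeled. A caterpillar tree is one in which some internal node is descended from all other internal nodes. For a caterpillar with $n$ leaves, internal nodes are numbered $1,\dots,n-1$ from the cherry (the internal node with exactly two descendant leaves) to the root, and internal edge $i$ is the edge immediately above node $i$, with an extra edge $n-1$ above the root. A coalescent history for a gene tree $G$ and species tree $S$ on the same label set is a map $h$ from internal nodes of $G$ to internal edges of $S$ such that (1) every label of a leaf below node $v$ of $G$ labels a leaf of $S$ below edge $h(v)$, and (2) if $v_2$ is descended from $v_1$ in $G$ then $h(v_2)$ is descended from $h(v_1)$ in $S$ (nodes and edges count as descended from themselves). *)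

(* Defs.v *)
From mathcomp Require Import all_boot all_order all_algebra.
Set Implicit Arguments. Unset Strict Implicit. Unset Printing Implicit Defensive.

Inductive tree : Type := Leaf of nat | Node of tree & tree.

Fixpoint leaves (t : tree) : seq nat :=
  match t with Leaf a => [:: a] | Node l r => leaves l ++ leaves r end.

(* Nodes are addressed by paths from the root (false = left, true = right).
   Node p is descended from node q iff q is a prefix of p. *)
Fixpoint subt (t : tree) (p : seq bool) : option tree :=
  match p with
  | [::] => Some t
  | b :: p' => match t with Leaf _ => None | Node l r => subt (if b then r else l) p' end
  end.

Fixpoint inodes (t : tree) : seq (seq bool) :=
  match t with
  | Leaf _ => [::]
  | Node l r => [::] :: (map (cons false) (inodes l) ++ map (cons true) (inodes r))
  end.

Definition leaves_below (t : tree) (p : seq bool) : seq nat :=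
  if subt t p is Some s then leaves s else [::].

Definition labeled (n : nat) (t : tree) : Prop := perm_eq (leaves t) (iota 0 n).

Definition caterpillar (t : tree) : Prop :=
  exists2 p, p \in inodes t & forall q, q \in inodes t -> prefix q p.

(* Coalescent histories: maps h from internal nodes of G to internal edges of S;
   the internal edge of S above internal node u of S is identified with u, so a
   leaf lies below that edge iff it lies below u, and edge u is descended from
   edge u' iff node u is descended from node u'. *)
Definition is_history (G S : tree)
    (h : {ffun 'I_(size (inodes G)) -> 'I_(size (inodes S))}) : bool :=
  let vG (i : 'I_(size (inodes G))) := nth [::] (inodes G) i in
  let vS (j : 'I_(size (inodes S))) := nth [::] (inodes S) j in
  [forall i, all (fun a => a \in leaves_below S (vS (h i))) (leaves_below G (vG i))]
  && [forall i, forall j, prefix (vG i) (vG j) ==> prefix (vS (h i)) (vS (h j))].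

Arguments is_history : clear implicits.

Definition nhist (G S : tree) : nat :=
  #|[set h | is_history G S h]|.

Definition Vn (n t : nat) : Prop :=
  exists G S, [/\ caterpillar G, caterpillar S, labeled n G, labeled n S
                & nhist G S = t].

(* Main.v *)
Require Import Defs.
From mathcomp Require Import all_boot all_order all_algebra.
Import GRing.Theory Num.Theory.
From mathcomp Require Import zify ring lra.
From Stdlib Require Import ClassicalEpsilon.
Set Implicit Arguments. Unset Strict Implicit. Unset Printing Implicit Defensive.

Lemma iotaSr k : iota 0 k.+1 = iota 0 k ++ [:: k].
Proof. by rewrite -addn1 iotaD. Qed.

Lemma count_down (P : pred nat) k :
  (forall a b, a <= b -> b < k -> P b -> P a) ->
  forall d, d < k -> P d = (d < count P (iota 0 k)).
Proof.
elim: k => [//|k IH] Hd d.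
have Hc : count P (iota 0 k) <= k by rewrite -{2}(size_iota 0 k) count_size.
rewrite iotaSr count_cat /= addn0.
case Pk: (P k).
  have allT: forall d, d <= k -> P d by move=> d' le; apply: (Hd d' k).
  have -> : count P (iota 0 k) = k.
    apply/eqP; rewrite -{2}(size_iota 0 k) -all_count; apply/allP => x.
    by rewrite mem_iota => /andP[_ /= lt]; apply: allT; rewrite ltnW.
  by move=> ltd; rewrite allT ?addn1 // -ltnS.
rewrite addn0 ltnS leq_eqVlt => /orP[/eqP->|ltd]; first by rewrite Pk ltnNge Hc.
apply: IH ltd => a b ab bk; apply: Hd => //; exact: ltnW.
Qed.

Lemma count_up (P : pred nat) k :
  (forall a b, a <= b -> b < k -> P a -> P b) ->
  forall i, i < k -> P i = (k - count P (iota 0 k) <= i).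
Proof.
elim: k P => [//|k IH] P Hu i.
have -> : iota 0 k.+1 = 0 :: map succn (iota 0 k) by rewrite /= -(iotaDl 1 0 k).
rewrite /= count_map.
have Hc : count (P \o succn) (iota 0 k) <= k by rewrite -{2}(size_iota 0 k) count_size.
case P0: (P 0).
  have allT: forall d, d <= k -> P d by move=> d' le; apply: (Hu 0 d').
  have -> : count (P \o succn) (iota 0 k) = k.
    apply/eqP; rewrite -{2}(size_iota 0 k) -all_count; apply/allP => x.
    by rewrite mem_iota => /andP[_ /= lt]; apply: allT.
  by move=> lti; rewrite allT ?addnn ?subnn // -ltnS.
case: i => [|i] lti; first by rewrite P0 add0n leqn0 subn_eq0 -ltnS ltnNge ltnS Hc.
rewrite add0n.
have -> : P i.+1 = (P \o succn) i by [].
rewrite (IH (P \o succn)) //.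
  by rewrite subSn // ltnS.
by move=> a b ab bk; apply: Hu.
Qed.

Fixpoint bnd (c : nat) (l : seq nat) : bool :=
  if l is x :: l' then (x <= c) && bnd c.+1 l' else true.

Fixpoint gen (L c lo : nat) : seq (seq nat) :=
  match L with
  | 0 => [:: [::]]
  | L'.+1 => flatten [seq [seq v :: t | t <- gen L' c.+1 v] | v <- iota lo (c.+1 - lo)]
  end.

Lemma mem_cons_map (x : nat) t (G : seq (seq nat)) v :
  (x :: t \in [seq v :: t | t <- G]) = (x == v) && (t \in G).
Proof.
apply/mapP/andP => [[t' tG [-> ->]]|[/eqP-> tG]]; last by exists t.
by [].
Qed.

Lemma mem_gen L c lo l :
  (l \in gen L c lo) = [&& size l == L, path leq lo l & bnd c l].
Proof.
elim: L c lo l => [|L IH] c lo [|x t] //=.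
  by apply/negbTE/allpairsPdep => -[v [t [_ _]]].
apply/allpairsPdep/idP => [[v [t' [vin tin [-> ->]]]] |].
  move: vin; rewrite mem_iota IH in tin *.
  case/and3P: tin => /eqP-> -> -> /andP[lov vc]; rewrite eqxx lov /= andbT.
  by case: (leqP lo c.+1) vc => [h|h]; [rewrite subnKC | rewrite (eqP (ltnW h : c.+1 - lo == 0)) ?addn0 ?ltnNge ?lov //; rewrite subn_eq0 ltnW].
move=> /and4P[sz /andP[lox px] xc bt]; exists x, t; split => //.
  by rewrite mem_iota lox /= subnKC // (leq_trans lox) // ltnW.
by rewrite IH -(eqSS _ L) sz px bt.
Qed.

Lemma gen_uniq L c lo : uniq (gen L c lo).
Proof.
elim: L c lo => [//|L IH] c lo /=.
apply: allpairs_uniq_dep; first exact: iota_uniq.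
  by move=> v _; exact: IH.
move=> [v1 t1] [v2 t2] _ _ /= [e1 e2]; subst v2.
by rewrite e2.
Qed.

Lemma gen_split L c lo : lo <= c ->
  gen L.+1 c lo = [seq lo :: t | t <- gen L c.+1 lo] ++ gen L.+1 c lo.+1.
Proof.
move=> le; rewrite /= subSS subSn //.
Qed.

Lemma gen_empty L c : gen L.+1 c c.+1 = [::].
Proof. by rewrite /= subnn. Qed.

Definition B2 (L d : nat) : int :=
  ('C(L.*2 + d, L))%:Z - (if L is L'.+1 then ('C(L.*2 + d, L'))%:Z else 0).

Lemma B2_0 L : B2 L.+1 0 = B2 L 1.
Proof.
rewrite /B2 !addn0 doubleS addn1 binS.
have e : 'C(L.*2.+1, L.+1) = 'C(L.*2.+1, L).
  have h : L <= L.*2.+1 by rewrite -addnn leqW // leq_addr.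
  by rewrite -(bin_sub h) -addnn subSn ?addnK // leq_addr.
rewrite e; case: L e => [|L] e /=; first by rewrite !bin0.
rewrite (binS (L.+1.*2.+1) L) !PoszD; lia.
Qed.

Lemma B2_S L d : B2 L.+1 d.+1 = (B2 L d.+2 + B2 L.+1 d)%R.
Proof.
rewrite /B2 doubleS !addSn !addnS binS.
case: L => [|L].
  rewrite !bin0 !PoszD; lia.
rewrite (binS (L.+1.*2 + d).+2 L) !PoszD; lia.
Qed.

Lemma size_gen L d lo : Posz (size (gen L (lo + d) lo)) = B2 L d.
Proof.
elim: L d lo => [|L IH] d lo; first by rewrite /B2 bin0.
elim: d lo => [|d IHd] lo.
  rewrite addn0 gen_split // gen_empty cats0 size_map.
  by rewrite -addn1 IH B2_0.
rewrite gen_split ?leq_addr // size_cat size_map PoszD.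
have -> : lo + d.+1 = lo.+1 + d by rewrite addSnnS.
rewrite IHd (_ : (lo.+1 + d).+1 = lo + d.+2); last lia.
by rewrite IH B2_S addrC.
Qed.

Lemma bndP c l : reflect (forall i, i < size l -> nth 0 l i <= c + i) (bnd c l).
Proof.
elim: l c => [|x l IH] c /=; first by constructor.
apply: (iffP andP) => [[xc /IH H] [|i] //=|H]; first by rewrite addn0.
  by rewrite ltnS -addSnnS => /H.
split; first by have := H 0; rewrite addn0; apply.
by apply/IH => i lt; rewrite addSn -addnS; apply: (H i.+1).
Qed.

Lemma count_iota_le (P : pred nat) m : count P (iota 0 m) <= m.
Proof. by rewrite -{2}(size_iota 0 m) count_size. Qed.

Section X.
Variable k : nat.

Definition Xe := gen k 0 0.

Lemma inX_size M : M \in Xe -> size M = k.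
Proof. by rewrite mem_gen => /and3P[/eqP]. Qed.

Lemma inX_mono M i j : M \in Xe -> i <= j -> j < k -> nth 0 M i <= nth 0 M j.
Proof.
rewrite mem_gen => /and3P[/eqP sz p _] ij jk.
have s : sorted leq M by apply: path_sorted p.
apply: (sorted_leq_nth leq_trans leqnn 0 s) => //; rewrite inE sz //.
exact: leq_ltn_trans jk.
Qed.

Lemma inX_bnd M i : M \in Xe -> i < k -> nth 0 M i <= i.
Proof.
rewrite mem_gen => /and3P[/eqP sz _ /bndP b] ik; apply: b; by rewrite sz.
Qed.

Lemma inX_intro M : size M = k ->
  (forall i, i.+1 < k -> nth 0 M i <= nth 0 M i.+1) ->
  (forall i, i < k -> nth 0 M i <= i) -> M \in Xe.
Proof.
move=> sz mono b; rewrite mem_gen sz eqxx /= path_sortedE; last exact: leq_trans.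
apply/andP; split; first (apply/andP; split).
- by apply/allP.
- by apply/(sortedP 0) => i; rewrite sz; apply: mono.
- by apply/bndP => i; rewrite sz; apply: b.
Qed.

Lemma count_ge M c t : M \in Xe -> 0 < t <= k ->
  (t <= count (fun l => c <= nth 0 M l) (iota 0 k)) = (c <= nth 0 M (k - t)).
Proof.
move=> MX /andP[t0 tk].
have cs : count (fun l => c <= nth 0 M l) (iota 0 k) <= k.
  by exact: count_iota_le.
rewrite (@count_up (fun l => c <= nth 0 M l) k).
- apply/idP/idP => H; lia.
- move=> a b ab bk ca; apply: leq_trans ca _; exact: inX_mono.
- lia.
Qed.

Definition sig M := [seq count (fun l => k - i <= nth 0 M l) (iota 0 k) | i <- iota 0 k].

Lemma nth_sig M i : i < k -> nth 0 (sig M) i = count (fun l => k - i <= nth 0 M l) (iota 0 k).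
Proof. by move=> ik; rewrite (nth_map 0) ?size_iota // nth_iota. Qed.

Lemma sig_in M : M \in Xe -> sig M \in Xe.
Proof.
move=> MX; apply: inX_intro.
- by rewrite size_map size_iota.
- move=> i ik; rewrite !nth_sig ?(ltnW ik) //; apply: sub_count => l /=.
  by apply: leq_trans; rewrite leq_sub2l.
- move=> i ik; rewrite nth_sig //.
  set cnt := count _ _.
  have cs : cnt <= k by exact: count_iota_le.
  case: (posnP cnt) => [->//|c0].
  have H : k - i <= nth 0 M (k - cnt) by rewrite -count_ge ?c0 ?cs.
  have kc : k - cnt < k by lia.
  have := inX_bnd MX kc; lia.
Qed.

Lemma sigK M : M \in Xe -> sig (sig M) = M.
Proof.
move=> MX; have sMX := sig_in MX.
apply: (@eq_from_nth _ 0); first by rewrite (inX_size MX) size_map size_iota.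
rewrite size_map size_iota => i ik.
rewrite nth_sig //.
set cnt := count _ _.
have cs : cnt <= k by exact: count_iota_le.
have Mi := inX_bnd MX ik.
have key : forall t, (t <= cnt) = (t <= nth 0 M i).
  move=> [|t] //.
  case: (leqP t.+1 k) => tk; last first.
    by apply/idP/idP => H; lia.
  rewrite /cnt count_ge // nth_sig; last lia.
  rewrite (_ : k - (k - t.+1) = t.+1); last lia.
  rewrite count_ge //; last lia.
  by rewrite (_ : k - (k - i) = i); last lia.
by apply/eqP; rewrite eqn_leq key leqnn -key leqnn.
Qed.

Definition leL (h M : seq nat) := all (fun i => nth 0 h i <= nth 0 M i) (iota 0 k).

Lemma sig_mono h M : h \in Xe -> M \in Xe -> leL h M -> leL (sig h) (sig M).
Proof.
move=> hX MX /allP H; apply/allP => i; rewrite mem_iota /= => ik.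
rewrite !nth_sig //; apply: sub_count => l /=.
move=> le; apply: leq_trans le _.
case: (ltnP l k) => lk; first by apply: H; rewrite mem_iota.
by rewrite !nth_default ?(inX_size hX) ?(inX_size MX).
Qed.
End X.

Section F.
Variable k : nat.

Definition fv M := count (fun h => leL k h M) (Xe k).

Lemma fv_le M : M \in Xe k -> fv M <= fv (sig k M).
Proof.
move=> MX; rewrite /fv -!size_filter.
rewrite -(size_map (sig k)); apply: uniq_leq_size.
  rewrite map_inj_in_uniq ?filter_uniq ?gen_uniq //.
  move=> x y; rewrite !mem_filter => /andP[_ xX] /andP[_ yX] e.
  by rewrite -(sigK xX) e sigK.
move=> y /mapP[x]; rewrite mem_filter => /andP[le xX] ->.
by rewrite mem_filter sig_in // sig_mono.
Qed.

Lemma fv_sig M : M \in Xe k -> fv (sig k M) = fv M.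
Proof.
move=> MX; apply/eqP; rewrite eqn_leq fv_le ?sig_in //.
by rewrite -{2}(sigK MX) fv_le // sig_in.
Qed.

Definition Fix := [seq M <- Xe k | sig k M == M].

End F.

Lemma orbit_aux (T U : eqType) (s : seq T) (g : T -> T) (f : T -> U) (V : seq U) :
  uniq s -> {in s, forall x, g x \in s} -> {in s, forall x, f (g x) = f x} ->
  uniq V -> {subset V <= map f s} ->
  2 * size V <= count (fun x => f x \in V) s + count (fun x => (g x == x) && (f x \in V)) s.
Proof.
move=> us gs fg.
elim: V => [|v V IH] /=; first by rewrite !count_pred0.
move=> /andP[vV uV] sub.
have {}IH : 2 * size V <= count (fun x => f x \in V) s + count (fun x => (g x == x) && (f x \in V)) s.
  by apply: IH uV _ => x xV; apply: sub; rewrite inE xV orbT.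
have split : forall a : pred T, count (fun x => a x && (f x \in v :: V)) s =
    count (fun x => a x && (f x == v)) s + count (fun x => a x && (f x \in V)) s.
  move=> a; have := count_predUI (fun x => a x && (f x == v)) (fun x => a x && (f x \in V)) s.
  rewrite (@eq_count _ (predI _ _) pred0) ?count_pred0 ?addn0 => [<-|x]; last first.
    rewrite /= /predI /=; case: (a x) => //=; case: eqP => //= ->; rewrite (negbTE vV) //.
  apply: eq_count => x /=; rewrite in_cons; by case: (a x).
have e1 := split predT; simpl in e1; rewrite (eq_count (a1 := fun x => f x \in v :: V) (a2 := fun x => true && (f x \in v :: V))) // e1.
rewrite split.
suff : 2 <= count (fun x => f x == v) s + count (fun x => (g x == x) && (f x == v)) s by lia.
have /mapP[x xs ->] := sub v (mem_head _ _).
case: (eqVneq (g x) x) => gx.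
  have h1 : 0 < count (fun y => f y == f x) s by rewrite -has_count; apply/hasP; exists x.
  have h2 : 0 < count (fun y => (g y == y) && (f y == f x)) s.
    by rewrite -has_count; apply/hasP; exists x => //; rewrite gx !eqxx.
  lia.
suff : 2 <= count (fun y => f y == f x) s by lia.
rewrite -size_filter.
have -> : 2 = size [:: x; g x] by [].
apply: uniq_leq_size; first by rewrite /= inE eq_sym gx.
move=> y; rewrite !inE => /orP[] /eqP ->; rewrite mem_filter ?xs ?gs ?fg ?eqxx //.
Qed.

Lemma orbit_bound (T U : eqType) (s : seq T) (g : T -> T) (f : T -> U) :
  uniq s -> {in s, forall x, g x \in s} -> {in s, forall x, f (g x) = f x} ->
  2 * size (undup (map f s)) <= size s + count (fun x => g x == x) s.
Proof.
move=> us gs fg.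
have sub : {subset undup (map f s) <= map f s} by move=> x; rewrite mem_undup.
have := orbit_aux us gs fg (undup_uniq _) sub.
rewrite -(count_predT s) (@eq_in_count _ (fun x => f x \in _) predT); last first.
  by move=> x xs; rewrite mem_undup map_f.
rewrite (@eq_in_count _ (fun x => (g x == x) && _) (fun x => g x == x)) //.
by move=> x xs; rewrite mem_undup map_f ?andbT.
Qed.

Section Z.
Variable k : nat.

Definition jM M := count (fun i => k <= i + nth 0 M i) (iota 0 k).
Definition zeta M := [seq nth 0 M i - jM M | i <- iota (k - jM M) (jM M)].
Definition Zl := flatten [seq gen j (k - j.*2) 0 | j <- iota 0 (k./2).+1].

Lemma jM_char M i : M \in Xe k -> i < k -> (k <= i + nth 0 M i) = (k - jM M <= i).
Proof.
move=> MX ik; rewrite /jM (@count_up (fun i => k <= i + nth 0 M i) k) //.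
move=> a b ab bk ka; exact: leq_trans ka (leq_add ab (inX_mono MX ab bk)).
Qed.

Lemma jM_lek M : jM M <= k.
Proof. exact: count_iota_le. Qed.

Lemma jM_big M i : M \in Xe k -> k - jM M <= i -> i < k -> jM M <= nth 0 M i.
Proof.
move=> MX le ik; have jk := jM_lek M.
have kj : k - jM M < k by lia.
have := jM_char MX kj; rewrite leqnn => H.
have := inX_mono MX le ik; lia.
Qed.

Lemma jM_half M : M \in Xe k -> (jM M).*2 <= k.
Proof.
move=> MX; have jk := jM_lek M; rewrite -addnn.
case: (posnP (jM M)) => [->//|j0].
have kj : k - jM M < k by lia.
have := jM_char MX kj; rewrite leqnn => H.
have := inX_bnd MX kj; lia.
Qed.

Lemma nth_zeta M s : s < jM M -> nth 0 (zeta M) s = nth 0 M (k - jM M + s) - jM M.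
Proof. by move=> sj; rewrite (nth_map 0) ?size_iota // nth_iota. Qed.

Lemma zeta_in M : M \in Xe k -> zeta M \in Zl.
Proof.
move=> MX; have jk := jM_lek M; have jh := jM_half MX.
apply/flatten_mapP; exists (jM M).
  by rewrite mem_iota add0n ltnS geq_half_double.
rewrite mem_gen size_map size_iota eqxx /= path_sortedE; last exact: leq_trans.
apply/andP; split; first (apply/andP; split).
- by apply/allP.
- apply/(sortedP 0) => s; rewrite size_map size_iota => sj.
  rewrite !nth_zeta ?(ltnW sj) //; apply: leq_sub2r; apply: (inX_mono MX); lia.
- apply/bndP => s; rewrite size_map size_iota => sj.
  rewrite nth_zeta //.
  have ks : k - jM M + s < k by lia.
  have := inX_bnd MX ks.
  rewrite -addnn in jh *; lia.
Qed.

Lemma zeta_inj M M' : M \in Fix k -> M' \in Fix k -> zeta M = zeta M' -> M = M'.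
Proof.
rewrite !mem_filter => /andP[/eqP sM MX] /andP[/eqP sM' MX'] ez.
have ej : jM M = jM M' by have := congr1 size ez; rewrite !size_map !size_iota.
set j := jM M in ej.
have big : forall i, k - j <= i -> i < k -> nth 0 M i = nth 0 M' i.
  move=> i le ik.
  have h1 := jM_big MX le ik.
  have h2 := @jM_big M' i MX'; rewrite -ej in h2; have {}h2 := h2 le ik.
  have := congr1 (fun z => nth 0 z (i - (k - j))) ez.
  rewrite /= !nth_zeta -?ej; try lia.
  rewrite -/j in h1 *; rewrite (_ : k - j + (i - (k - j)) = i); lia.
have small : forall (N : seq nat), N \in Xe k -> jM N = j -> forall l i, l < k - j -> i < k - j ->
    k - i <= nth 0 N l -> False.
  move=> N NX eN l i lj ij Hl.
  have lk : l < k by lia.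
  have ik : i < k by lia.
  have cl := jM_char NX lk; rewrite eN in cl.
  have ci := jM_char NX ik; rewrite eN in ci.
  have nl : ~~ (k <= l + nth 0 N l) by rewrite cl -ltnNge.
  have ni : ~~ (k <= i + nth 0 N i) by rewrite ci -ltnNge.
  have li : l < i by lia.
  have := inX_mono NX (ltnW li) ik; lia.
apply: (@eq_from_nth _ 0); first by rewrite (inX_size MX) (inX_size MX').
rewrite (inX_size MX) => i ik.
case: (leqP (k - j) i) => ij; first exact: big.
rewrite -sM -sM' !nth_sig //; apply: eq_in_count => l; rewrite mem_iota /= => lk.
case: (leqP (k - j) l) => lj; first by rewrite big.
apply/idP/idP => H; exfalso.
  exact: (small M MX erefl l i lj ij H).
exact: (small M' MX' (esym ej) l i lj ij H).
Qed.

End Z.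

Lemma size_Zl_aux k J : J.*2 <= k ->
  Posz (size (flatten [seq gen j (k - j.*2) 0 | j <- iota 0 J.+1])) = Posz 'C(k, J).
Proof.
elim: J => [|J IH] hJ; first by rewrite /= bin0.
rewrite iotaSr map_cat flatten_cat size_cat PoszD IH; last by rewrite doubleS in hJ; lia.
rewrite /= cats0.
have := size_gen J.+1 (k - J.+1.*2) 0; rewrite add0n => ->.
rewrite /B2 subnKC //; lia.
Qed.

Lemma size_Zl k : size (Zl k) = 'C(k, k./2).
Proof.
apply/eqP; rewrite -eqz_nat; apply/eqP; apply: size_Zl_aux.
by rewrite -geq_half_double.
Qed.

Lemma size_Fix k : size (Fix k) <= 'C(k, k./2).
Proof.
rewrite -size_Zl -(size_map (zeta k)); apply: uniq_leq_size.
  rewrite map_inj_in_uniq ?filter_uniq ?gen_uniq //.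
  move=> x y xF yF; exact: zeta_inj.
move=> z /mapP[M]; rewrite mem_filter => /andP[_ MX] ->; exact: zeta_in.
Qed.

Lemma size_Xe k : k.+1 * size (Xe k) = 'C(k.*2, k).
Proof.
have := size_gen k 0 0; rewrite /B2 addn0 /Xe => e.
case: k e => [|k] e; first by [].
rewrite addn0 in e.
have h := mul_bin_left (k.+1.*2) k.
apply/eqP; rewrite -eqz_nat; apply/eqP.
rewrite PoszM e.
rewrite (_ : k.+1.*2 - k = k.+2) in h; last lia.
have h' := congr1 Posz h; rewrite !PoszM in h'.
lia.
Qed.

Inductive catp : tree -> Prop :=
| cat_ch a b : catp (Node (Leaf a) (Leaf b))
| cat_l a t : catp t -> catp (Node (Leaf a) t)
| cat_r a t : catp t -> catp (Node t (Leaf a)).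

Lemma inodes_node_nil l r : [::] \in inodes (Node l r).
Proof. by rewrite /= inE eqxx. Qed.

Lemma inodes_l a t : inodes (Node (Leaf a) t) = [::] :: map (cons true) (inodes t).
Proof. by []. Qed.

Lemma inodes_r a t : inodes (Node t (Leaf a)) = [::] :: map (cons false) (inodes t).
Proof. by rewrite /= cats0. Qed.

Lemma cat_sub b (s : seq (seq bool)) : [::] \in s ->
  (exists2 p, p \in [::] :: map (cons b) s & forall q, q \in [::] :: map (cons b) s -> prefix q p) ->
  exists2 p, p \in s & forall q, q \in s -> prefix q p.
Proof.
move=> s0 [p]; rewrite inE => /orP[/eqP->|] H.
  by have := H [:: b]; rewrite inE map_f ?orbT // => /(_ isT).
case/mapP: H => p' p'in -> H; exists p' => // q qin.
by have := H (b :: q); rewrite inE map_f ?orbT // prefix_cons eqxx => /(_ isT).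
Qed.

Lemma inodes_N l r : inodes (Node l r) = [::] :: map (cons false) (inodes l) ++ map (cons true) (inodes r).
Proof. by []. Qed.

Lemma caterpillar_cat t : caterpillar t -> catp t.
Proof.
elim: t => [a|l IHl r IHr]; first by case=> p.
case: l IHl => [a|l1 l2] IHl; case: r IHr => [b|r1 r2] IHr H.
- exact: cat_ch.
- apply: cat_l; apply: IHr; apply: (@cat_sub true); first exact: inodes_node_nil.
  by rewrite -(inodes_l a).
- apply: cat_r; apply: IHl; apply: (@cat_sub false); first exact: inodes_node_nil.
  by rewrite -(inodes_r b).
- case: H => p pin H.
  have h1 := H [:: false]; have h2 := H [:: true].
  have /h1 : [:: false] \in inodes (Node (Node l1 l2) (Node r1 r2)).
    by rewrite inodes_N inE mem_cat map_f ?inodes_node_nil.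
  have /h2 : [:: true] \in inodes (Node (Node l1 l2) (Node r1 r2)).
    by rewrite inodes_N inE mem_cat orbC map_f ?inodes_node_nil ?orbT.
  by case: p {pin H h1 h2} => [|x p] //=; case: x.
Qed.

Lemma size_leaves t : size (leaves t) = (size (inodes t)).+1.
Proof.
elim: t => [a|l IHl r IHr] //=.
by rewrite size_cat IHl IHr size_cat !size_map addSn addnS.
Qed.

Definition lb t i := leaves_below t (nth [::] (inodes t) i).

Lemma lb0 t : lb t 0 = leaves t.
Proof. by case: t. Qed.

Lemma lb_l a t i : i < size (inodes t) -> lb (Node (Leaf a) t) i.+1 = lb t i.
Proof. by move=> lt; rewrite /lb inodes_l /= (nth_map [::]). Qed.

Lemma lb_r a t i : i < size (inodes t) -> lb (Node t (Leaf a)) i.+1 = lb t i.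
Proof. by move=> lt; rewrite /lb inodes_r /= (nth_map [::]). Qed.

Lemma cat_prefix t : catp t -> forall i j, i < size (inodes t) -> j < size (inodes t) ->
  prefix (nth [::] (inodes t) i) (nth [::] (inodes t) j) = (i <= j).
Proof.
have gen : forall b (s : seq (seq bool)), (forall i j, i < size s -> j < size s ->
    prefix (nth [::] s i) (nth [::] s j) = (i <= j)) ->
    forall i j, i < (size s).+1 -> j < (size s).+1 ->
    prefix (nth [::] ([::] :: map (cons b) s) i) (nth [::] ([::] :: map (cons b) s) j) = (i <= j).
  move=> b s H [|i] [|j] //= ilt jlt; rewrite ?(nth_map [::]) // ?prefix_cons ?eqxx ?H //.
elim => [a b|a t0 ct IH|a t0 ct IH] i j.
- by case: i => [|[]] //; case: j => [|[]].
- by rewrite inodes_l /= size_map; apply: gen.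
- by rewrite inodes_r /= size_map; apply: gen.
Qed.

Lemma cat_lb_sub t : catp t -> forall i, i < size (inodes t) -> subseq (lb t i) (leaves t).
Proof.
elim => [a b|a t0 ct IH|a t0 ct IH] [|i] //; rewrite ?lb0 //.
- rewrite inodes_l /= size_map ltnS => lt; rewrite lb_l //.
  exact: subseq_trans (IH _ lt) (subseq_cons _ _).
- rewrite inodes_r /= size_map ltnS => lt; rewrite lb_r //.
  exact: subseq_trans (IH _ lt) (prefix_subseq _ _).
Qed.

Lemma cat_lb_mono t : catp t -> forall i j, i <= j -> j < size (inodes t) ->
  subseq (lb t j) (lb t i).
Proof.
move=> ct i j ij jlt; case: i ij => [|i] ij.
  by rewrite lb0; apply: cat_lb_sub.
elim: ct i j ij jlt => [a b|a t0 ct IH|a t0 ct IH] i [|j] //.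
- rewrite inodes_l /= size_map !ltnS => ij jlt.
  rewrite !lb_l //; try lia.
  case: i ij => [|i] ij; first by rewrite lb0; apply: cat_lb_sub.
  exact: IH.
- rewrite inodes_r /= size_map !ltnS => ij jlt.
  rewrite !lb_r //; try lia.
  case: i ij => [|i] ij; first by rewrite lb0; apply: cat_lb_sub.
  exact: IH.
Qed.

Lemma cat_lb_size t : catp t -> forall i, i < size (inodes t) ->
  size (lb t i) = size (leaves t) - i.
Proof.
elim => [a b|a t0 ct IH|a t0 ct IH] [|i] //; rewrite ?lb0 ?subn0 //.
- rewrite inodes_l /= size_map ltnS => lt; rewrite lb_l // IH //.
- by rewrite inodes_r /= size_map ltnS => lt; rewrite lb_r // IH // size_cat addn1 subSS.
Qed.

Section Hist.
Variables (n : nat) (Gt St : tree).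
Hypotheses (cG : catp Gt) (cS : catp St) (lG : labeled n Gt) (lS : labeled n St) (n2 : 1 < n).

Let k := n.-1.

Lemma lab_size t : labeled n t -> size (leaves t) = n.
Proof. by move/perm_size; rewrite size_iota. Qed.

Lemma lab_uniq t : labeled n t -> uniq (leaves t).
Proof. by move/perm_uniq => ->; exact: iota_uniq. Qed.

Lemma lab_mem t x : labeled n t -> (x \in leaves t) = (x < n).
Proof. by move/perm_mem => ->; rewrite mem_iota. Qed.

Lemma lab_inodes t : labeled n t -> size (inodes t) = k.
Proof. by move=> l; have := lab_size l; rewrite size_leaves /k => <-. Qed.

Definition ok i : pred nat := fun d => all (fun x => x \in lb St d) (lb Gt i).

Lemma szG : size (inodes Gt) = k. Proof. exact: lab_inodes. Qed.
Lemma szS : size (inodes St) = k. Proof. exact: lab_inodes. Qed.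

Lemma ok_down i d d' : d' <= d -> d < k -> ok i d -> ok i d'.
Proof.
move=> le dk /allP H; apply/allP => x /H; apply: mem_subseq.
by apply: cat_lb_mono; rewrite ?szS.
Qed.

Lemma ok_up i i' d : i <= i' -> i' < k -> ok i d -> ok i' d.
Proof.
move=> le ik /allP H; apply/allP => x xin; apply: H; apply: (mem_subseq _ xin).
by apply: cat_lb_mono; rewrite ?szG.
Qed.

Lemma ok0 i : i < k -> ok i 0.
Proof.
move=> ik; apply/allP => x xin; rewrite lb0 lab_mem // -(lab_mem _ lG).
by apply: (mem_subseq _ xin); apply: cat_lb_sub; rewrite ?szG.
Qed.

Lemma ok_le i d : i < k -> d < k -> ok i d -> d <= i.
Proof.
move=> ik dk /allP H.
have u : uniq (lb Gt i) by apply: (subseq_uniq (cat_lb_sub cG _)); rewrite ?szG // lab_uniq.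
have := uniq_leq_size u H.
rewrite !cat_lb_size ?szG ?szS // !(lab_size lG) !(lab_size lS).
rewrite /k in ik dk; lia.
Qed.

Definition Ml := [seq (count (ok i) (iota 0 k)).-1 | i <- iota 0 k].

Lemma nth_Ml i : i < k -> nth 0 Ml i = (count (ok i) (iota 0 k)).-1.
Proof. by move=> ik; rewrite (nth_map 0) ?size_iota // nth_iota. Qed.

Lemma ok_char i d : i < k -> d < k -> ok i d = (d <= nth 0 Ml i).
Proof.
move=> ik dk; rewrite nth_Ml //.
have dc : forall a b, a <= b -> b < k -> ok i b -> ok i a.
  by move=> a b ab bk; apply: ok_down.
have k0 : 0 < k by lia.
have c0 : 0 < count (ok i) (iota 0 k) by rewrite -(count_down dc k0) ok0.
rewrite (count_down dc dk); move: c0; case: (count _ _) => //.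
Qed.

Lemma Ml_in : Ml \in Xe k.
Proof.
apply: inX_intro; first by rewrite size_map size_iota.
- move=> i ik; rewrite !nth_Ml // ?(ltnW ik) //.
  rewrite -!subn1; apply: leq_sub2r; apply: sub_count => d; apply: ok_up => //; exact: leqnSn.
- move=> i ik; apply: (ok_le ik).
    rewrite nth_Ml //; have := count_iota_le (ok i) k; lia.
  rewrite ok_char //; last by rewrite nth_Ml //; have := count_iota_le (ok i) k; lia.
Qed.
End Hist.

Definition conv a b (h : {ffun 'I_a -> 'I_b}) : seq nat := [seq val (h i) | i <- enum 'I_a].

Lemma size_conv a b (h : {ffun 'I_a -> 'I_b}) : size (conv h) = a.
Proof. by rewrite size_map size_enum_ord. Qed.

Lemma nth_conv a b (h : {ffun 'I_a -> 'I_b}) (i : 'I_a) : nth 0 (conv h) i = h i.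
Proof. by rewrite (nth_map i) ?size_enum_ord // nth_ord_enum. Qed.

Lemma card_conv a b (P : pred {ffun 'I_a -> 'I_b}) (L : seq (seq nat)) :
  uniq L -> (forall l, l \in L -> size l = a /\ all (fun x => x < b) l) ->
  (forall h, P h = (conv h \in L)) -> #|[set h | P h]| = size L.
Proof.
move=> uL HL HP.
have inj : injective (@conv a b).
  move=> h1 h2 e; apply/ffunP => i; apply: ord_inj.
  by rewrite -!nth_conv e.
rewrite cardE -(size_map (@conv a b)); apply: perm_size.
apply: uniq_perm; first by rewrite map_inj_uniq ?enum_uniq.
  exact: uL.
move=> l; apply/mapP/idP => [[h]|lL].
  by rewrite mem_enum inE HP => hin ->.
have [sz /(all_nthP 0) al] := HL l lL.
have Hb : forall i : 'I_a, nth 0 l i < b by move=> i; apply: al; rewrite sz.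
exists [ffun i => Ordinal (Hb i)].
  rewrite mem_enum inE HP.
  suff -> : conv [ffun i => Ordinal (Hb i)] = l by [].
  apply: (@eq_from_nth _ 0); first by rewrite size_conv sz.
  rewrite size_conv => i ia.
  by rewrite (nth_conv _ (Ordinal ia)) ffunE.
apply: (@eq_from_nth _ 0); first by rewrite size_conv sz.
rewrite sz => i ia.
by rewrite (nth_conv _ (Ordinal ia)) ffunE.
Qed.

Section Hist2.
Variables (n : nat) (Gt St : tree).
Hypotheses (cG : catp Gt) (cS : catp St) (lG : labeled n Gt) (lS : labeled n St) (n2 : 1 < n).

Let k := n.-1.

Lemma hist_char (h : {ffun 'I_(size (inodes Gt)) -> 'I_(size (inodes St))}) :
  is_history Gt St h = (conv h \in [seq l <- Xe k | leL k l (Ml n Gt St)]).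
Proof.
have sG := szG lG; have sS := szS lS.
have MX := Ml_in cG cS lG lS n2.
rewrite mem_filter /is_history.
have HB : [forall i : 'I_(size (inodes Gt)), forall j : 'I_(size (inodes Gt)), prefix (nth [::] (inodes Gt) i) (nth [::] (inodes Gt) j) ==>
    prefix (nth [::] (inodes St) (h i)) (nth [::] (inodes St) (h j))] =
    [forall i : 'I_(size (inodes Gt)), forall j : 'I_(size (inodes Gt)), (i <= j) ==> (h i <= h j)].
  apply: eq_forallb => i; apply: eq_forallb => j.
  by rewrite !cat_prefix.
have HA : [forall i : 'I_(size (inodes Gt)), all (fun a => a \in leaves_below St (nth [::] (inodes St) (h i)))
      (leaves_below Gt (nth [::] (inodes Gt) i))] =
    [forall i : 'I_(size (inodes Gt)), h i <= nth 0 (Ml n Gt St) i].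
  apply: eq_forallb => i.
  have ik : (i : nat) < k by rewrite /k -sG.
  have hk : (h i : nat) < k by rewrite /k -sS.
  exact: (ok_char cG cS lG lS n2 ik hk).
rewrite HA HB.
apply/andP/andP => [[/forallP A /forallP B]|[/allP CL CX]]; split.
- apply/allP => i; rewrite mem_iota /= => ik.
  have i1 : i < size (inodes Gt) by rewrite sG.
  by rewrite (nth_conv h (Ordinal i1)); apply: A.
- apply: inX_intro.
  + by rewrite size_conv.
  + move=> i ik.
    have i1 : i < size (inodes Gt) by rewrite sG; lia.
    have i2 : i.+1 < size (inodes Gt) by rewrite sG.
    rewrite (nth_conv h (Ordinal i1)) (nth_conv h (Ordinal i2)).
    by have /forallP/(_ (Ordinal i2))/implyP := B (Ordinal i1); apply.
  + move=> i ik.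
    have i1 : i < size (inodes Gt) by rewrite sG.
    rewrite (nth_conv h (Ordinal i1)).
    apply: leq_trans (A (Ordinal i1)) _.
    exact: inX_bnd MX ik.
- apply/forallP => i.
  have ik : (i : nat) < k by rewrite /k -sG.
  by have := CL i; rewrite mem_iota ik nth_conv => /(_ isT).
- apply/forallP => i; apply/forallP => j; apply/implyP => ij.
  rewrite -!nth_conv; apply: inX_mono CX ij _.
  by rewrite /k -sG.
Qed.

Lemma nhist_fv : nhist Gt St = fv k (Ml n Gt St).
Proof.
rewrite /nhist (card_conv (L := [seq l <- Xe k | leL k l (Ml n Gt St)])).
- by rewrite size_filter.
- by rewrite filter_uniq // gen_uniq.
- move=> l; rewrite mem_filter => /andP[_ lX]; split.
    by rewrite (inX_size lX) (szG lG).
  apply/(all_nthP 0) => i; rewrite (inX_size lX) => ik.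
  have := inX_bnd lX ik; rewrite (szS lS); lia.
- exact: hist_char.
Qed.

End Hist2.

Local Open Scope ring_scope.

Definition pdec (P : Prop) : bool := if excluded_middle_informative P then true else false.

Lemma pdecP (P : Prop) : reflect P (pdec P).
Proof. by rewrite /pdec; case: excluded_middle_informative => h; constructor. Qed.

Theorem proposition3 (n : nat) (hn : (2 <= n)%N) :
  exists s : seq nat,
    [/\ uniq s,
        (forall t, Vn n t <-> t \in s)
      & (size s)%:R <= (1 / 2 : rat) *
           ((n%:R)^-1 * ('C(2 * n - 2, n - 1))%:R + ('C(n - 1, (n - 1)./2))%:R)].
Proof.
have Vsub : forall t, Vn n t -> t \in map (fv n.-1) (Xe n.-1).
  move=> t [G [S [cG cS lG lS <-]]].
  rewrite (nhist_fv (caterpillar_cat cG) (caterpillar_cat cS) lG lS hn).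
  by apply: map_f; apply: (Ml_in (caterpillar_cat cG) (caterpillar_cat cS) lG lS hn).
exists [seq t <- undup (map (fv n.-1) (Xe n.-1)) | pdec (Vn n t)]; split.
- by rewrite filter_uniq // undup_uniq.
- move=> t; rewrite mem_filter mem_undup; split.
    by move=> V; rewrite Vsub // andbT; apply/pdecP.
  by case/andP => /pdecP.
case: n hn Vsub => [//|k] hn Vsub.
have e1 : (2 * k.+1 - 2 = k.*2)%N by rewrite -addnn; lia.
rewrite e1 subn1 /=.
set v := size _.
have h1 : (v <= size (undup (map (fv k) (Xe k))))%N.
  by rewrite /v size_filter count_size.
have h2 := @orbit_bound _ _ (Xe k) (sig k) (fv k) (gen_uniq _ _ _)
  (fun M MX => sig_in MX) (fun M MX => fv_sig MX).
have h3 := size_Fix k.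
rewrite -size_filter -/(Fix k) in h2.
have h4 := size_Xe k.
rewrite -h4 natrM mulrA mulVf ?mul1r ?pnatr_eq0 //.
have : (2 * v <= size (Xe k) + 'C(k, k./2))%N.
  apply: leq_trans (leq_trans _ h2) _; [by rewrite leq_mul2l h1 orbT | by rewrite leq_add2l h3].
rewrite -(ler_nat rat) natrM natrD => H.
lra.
Qed.
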